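(* Let $\mathcal{L}:\mathbb{R}^d\to\mathbb{R}$ be differentiable with $\nabla\mathcal{L}$ Lipschitz continuous with constant $L$. Run full-batch MoFO with $\beta_1<\sqrt{\beta_2}<1$, $\epsilon=0$ and learning rates $\eta_t=\eta/\sqrt t$ ($\eta>0$). Then for every iteration $t\ge1$ and every coordinate $i$, $$g_{i,t}\frac{\hat m_{i,t}}{\sqrt{\hat v_{i,t}}}\ge\sqrt{1-\beta_2}\left(|g_{i,t}|-\left[\frac{2\sqrt2\,\beta_1}{(1-\beta_1)^2}+\frac{4}{1-\beta_2}\right]\frac{LC\eta}{\sqrt t}\right),$$ where $C=\dfrac{\sqrt{d\cdot(\alpha\%)+B}}{\sqrt{1-\beta_2}\,(1-\beta_1/\sqrt{\beta_2})}$.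
   Context: The coordinates of $\mathbb{R}^d$ are partitioned into $B$ blocks of sizes $d_1,\dots,d_B$ with $\sum_kd_k=d$. Fix $\alpha\%\in(0,1]$. For $z\in\mathbb{R}^d$, $\texttt{FLT}_\alpha(z)\in\{0,1\}^d$ equals, in each block $k$, $1$ exactly on a set of $\lceil d_k\cdot\alpha\%\rceil$ indices with the largest absolute values of $z$ within that block (ties broken in favour of smaller indices), and $0$ elsewhere. Full-batch MoFO with $\beta_1,\beta_2\in(0,1)$, learning rates $\eta_t>0$, initial point $\theta_0$: $m_0=v_0=0$; for $t\ge1$, $g_t=\nabla\mathcal{L}(\theta_{t-1})$, $m_t=\beta_1m_{t-1}+(1-\beta_1)g_t$, $v_t=\beta_2v_{t-1}+(1-\beta_2)g_t\odot g_t$, $\hat m_t=m_t/(1-\beta_1^t)$, $\hat v_t=v_t/(1-\beta_2^t)$, $\theta_t=\theta_{t-1}-\eta_t(\hat m_t\odot\texttt{FLT}_\alpha(m_t))/\sqrt{\hat v_t}$ entrywise ($\epsilon=0$: no additive constant in the denominator; a quotient with $\hat v_{i,t}=0$, where necessarily $\hat m_{i,t}=0$, is taken as $0$). Subscript $i,t$ denotes the $i$-th coordinate at iteration $t$. *)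

(* Defs.v *)
From HB Require Import structures.
From mathcomp Require Import all_boot all_order all_algebra.
From mathcomp Require Import all_classical all_reals topology normedtype derive.
Set Implicit Arguments. Unset Strict Implicit. Unset Printing Implicit Defensive.
Import Order.TTheory GRing.Theory Num.Theory.
Import numFieldNormedType.Exports.
Local Open Scope ring_scope.

Section MoFO.
Variables (R : realType) (d B : nat) (blk : 'I_d -> 'I_B).

Definition norm2 (v : 'rV[R]_d) : R := Num.sqrt (\sum_(i < d) v ord0 i ^+ 2).

Definition gradient (f : 'rV[R]_d -> R) (x : 'rV[R]_d) : 'rV[R]_d :=
  \row_(i < d) ('d f x (delta_mx ord0 i : 'rV[R]_d)).

Definition block_size (i : 'I_d) : nat := #|[set j | blk j == blk i]|.

Definition beats (z : 'rV[R]_d) (j i : 'I_d) : bool :=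
  (`|z ord0 i| < `|z ord0 j|) || ((`|z ord0 j| == `|z ord0 i|) && (j < i)%N).

(* FLT_alpha(z): in each block k, 1 exactly on the ceil(d_k * alpha) top-ranked
   indices of that block (rank = number of block-mates preceding it). *)
Definition FLT (alpha : R) (z : 'rV[R]_d) : 'rV[R]_d :=
  \row_(i < d)
    (if (#|[set j | (blk j == blk i) && beats z j i]|%:Z
         < Num.ceil ((block_size i)%:R * alpha))%R then 1 else 0).

Fixpoint mofo_state (f : 'rV[R]_d -> R) (alpha beta1 beta2 : R)
    (eta : nat -> R) (theta0 : 'rV[R]_d) (t : nat)
    : 'rV[R]_d * 'rV[R]_d * 'rV[R]_d :=
  match t with
  | 0 => (theta0, 0, 0)
  | t'.+1 =>
    let: (theta, m, v) := mofo_state f alpha beta1 beta2 eta theta0 t' in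
    let g := gradient f theta in
    let m' := beta1 *: m + (1 - beta1) *: g in
    let v' := beta2 *: v + (1 - beta2) *: map2_mx (fun a b => a * b) g g in
    let mh := (1 - beta1 ^+ t'.+1)^-1 *: m' in
    let vh := (1 - beta2 ^+ t'.+1)^-1 *: v' in
    let flt := FLT alpha m' in
    let upd := \row_(i < d)
       (if vh ord0 i == 0 then 0
        else mh ord0 i * flt ord0 i / Num.sqrt (vh ord0 i)) in
    (theta - eta t'.+1 *: upd, m', v')
  end.

(* g_t = grad L(theta_{t-1}), m_t, v_t, hat m_t, hat v_t  for t >= 1 *)
Definition mofo_theta f alpha beta1 beta2 eta theta0 t :=
  (mofo_state f alpha beta1 beta2 eta theta0 t).1.1.
Definition mofo_g f alpha beta1 beta2 eta theta0 (t : nat) :=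
  gradient f (mofo_theta f alpha beta1 beta2 eta theta0 t.-1).
Definition mofo_m f alpha beta1 beta2 eta theta0 t :=
  (mofo_state f alpha beta1 beta2 eta theta0 t).1.2.
Definition mofo_v f alpha beta1 beta2 eta theta0 t :=
  (mofo_state f alpha beta1 beta2 eta theta0 t).2.
Definition mofo_mhat f alpha beta1 beta2 eta theta0 (t : nat) :=
  (1 - beta1 ^+ t)^-1 *: mofo_m f alpha beta1 beta2 eta theta0 t.
Definition mofo_vhat f alpha beta1 beta2 eta theta0 (t : nat) :=
  (1 - beta2 ^+ t)^-1 *: mofo_v f alpha beta1 beta2 eta theta0 t.

End MoFO.

(* Main.v *)
Require Import Defs.
From HB Require Import structures.
From mathcomp Require Import all_boot all_order all_algebra.
From mathcomp Require Import all_classical all_reals topology normedtype derive.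
From mathcomp Require Import ring lra.
Import Order.TTheory GRing.Theory Num.Theory.
Import numFieldNormedType.Exports.
Local Open Scope ring_scope.

Section Scal.
Variable R : realType.

Lemma step_m (b1 b2 M V G p : R) : 0 < b1 < 1 -> 0 < b2 < 1 -> b1 < Num.sqrt b2 ->
  0 <= p <= 1 -> 0 <= V ->
  `|M| <= (1 - p) * ((1 - b1) / (Num.sqrt (1 - b2) * (1 - b1 / Num.sqrt b2))) * Num.sqrt V ->
  `|b1 * M + (1 - b1) * G| <= (1 - b1 * p) *
     ((1 - b1) / (Num.sqrt (1 - b2) * (1 - b1 / Num.sqrt b2))) * Num.sqrt (b2 * V + (1 - b2) * (G * G)).
Proof.
move=> /andP[b1p b1l] /andP[b2p b2l] hq /andP[p0 p1] V0 hM.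
set s2 := Num.sqrt b2 in hq hM *; set s1 := Num.sqrt (1 - b2) in hM *; set sV := Num.sqrt V in hM *.
set S := Num.sqrt _.
have s2p : 0 < s2 by rewrite sqrtr_gt0.
have s1p : 0 < s1 by rewrite sqrtr_gt0 subr_gt0.
have s2l : s2 <= 1 by rewrite /s2 -sqrtr1 ler_sqrt //; lra.
have sV0 : 0 <= sV by apply: sqrtr_ge0.
set q := b1 / s2 in hM *.
have qb : b1 = q * s2 by rewrite /q mulrVK // unitfE gt_eqF.
have ql : q < 1 by rewrite /q ltr_pdivrMr // mul1r.
have qg : b1 <= q by rewrite /q ler_pdivlMr //; nra.
set K := (1 - b1) / (s1 * (1 - q)) in hM *.
have Kp : 0 < K by rewrite /K divr_gt0 // ?mulr_gt0 //; lra.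
have hK : 1 - b1 = K * (1 - q) * s1.
  rewrite /K; field; apply/andP; split; rewrite gt_eqF //; lra.
have GG0 : 0 <= G * G by rewrite -expr2 sqr_ge0.
have X1 : s2 * sV <= S.
  rewrite /s2 /sV -sqrtrM; last lra.
  rewrite ler_sqrt; last by apply: addr_ge0; apply: mulr_ge0; lra.
  nra.
have X2 : s1 * `|G| <= S.
  rewrite /s1 -sqrtr_sqr -sqrtrM; last lra.
  rewrite ler_sqrt; last by apply: addr_ge0; apply: mulr_ge0; lra.
  rewrite expr2; nra.
have S0 : 0 <= S by apply: sqrtr_ge0.
have hG0 : 0 <= `|G| by [].
have hM0 : 0 <= `|M| by [].
apply: (le_trans (ler_normD _ _)).
rewrite !normrM (ger0_norm (ltW b1p)) (ger0_norm (_ : 0 <= 1 - b1)); last lra.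
rewrite hK.
clearbody q K S s1 s2 sV.
have e1 : b1 * `|M| <= q * (1 - p) * K * (s2 * sV).
  have hqs : 0 <= q * s2 by apply: mulr_ge0; lra.
  have := ler_wpM2l hqs hM; rewrite qb; lra.
have e2 : q * (1 - p) * K * (s2 * sV) <= q * (1 - p) * K * S.
  apply: ler_wpM2l => //; apply: mulr_ge0; [apply: mulr_ge0|]; lra.
have e3 : K * (1 - q) * s1 * `|G| <= K * (1 - q) * S.
  rewrite -mulrA ler_wpM2l //; apply: mulr_ge0; lra.
have e4 : q * (1 - p) * K * S + K * (1 - q) * S <= (1 - b1 * p) * K * S.
  have : q * (1 - p) + (1 - q) <= 1 - b1 * p.
    have hh : 0 <= q - b1 by lra.
    have := mulr_ge0 hh p0; lra.
  move=> h; have := ler_wpM2r (mulr_ge0 (ltW Kp) S0) h. 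
  rewrite !mulrDl !mulrA; lra.
lra.
Qed.
End Scal.
Section N2.
Variables (R : realType) (d : nat).
Implicit Types x y : 'rV[R]_d.

Lemma ss_ge0 x : 0 <= \sum_(i < d) x ord0 i ^+ 2.
Proof. by apply: sumr_ge0 => i _; apply: sqr_ge0. Qed.

Lemma norm2_ge0 x : 0 <= norm2 x.
Proof. exact: sqrtr_ge0. Qed.

Lemma norm2_sq x : norm2 x ^+ 2 = \sum_(i < d) x ord0 i ^+ 2.
Proof. by rewrite /norm2 sqr_sqrtr // ss_ge0. Qed.

Lemma norm2_coord x j : `|x ord0 j| <= norm2 x.
Proof.
rewrite /norm2 -sqrtr_sqr ler_sqrt ?ss_ge0 //.
rewrite (bigD1 j) //= lerDl; apply: sumr_ge0 => i _; apply: sqr_ge0.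
Qed.

Lemma norm2Z c x : norm2 (c *: x) = `|c| * norm2 x.
Proof.
rewrite /norm2 -sqrtr_sqr -sqrtrM ?sqr_ge0 //; congr Num.sqrt.
by rewrite mulr_sumr; apply: eq_bigr => i _; rewrite mxE exprMn.
Qed.

Lemma norm2N x : norm2 (- x) = norm2 x.
Proof. by rewrite -scaleN1r norm2Z normrN normr1 mul1r. Qed.

Lemma cauchy_schwarz x y :
  \sum_(i < d) x ord0 i * y ord0 i <= norm2 x * norm2 y.
Proof.
set nx := norm2 x; set ny := norm2 y.
have nx0 : 0 <= nx by apply: norm2_ge0.
have ny0 : 0 <= ny by apply: norm2_ge0.
have key : 2 * (nx * ny) * \sum_(i < d) x ord0 i * y ord0 i <= 2 * (nx ^+ 2 * ny ^+ 2).
  have -> : 2 * (nx ^+ 2 * ny ^+ 2) =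
     \sum_(i < d) (ny ^+ 2 * x ord0 i ^+ 2 + nx ^+ 2 * y ord0 i ^+ 2).
    rewrite big_split /= -!mulr_sumr -!norm2_sq /nx /ny; ring.
  rewrite mulr_sumr; apply: ler_sum => i _.
  have := sqr_ge0 (ny * x ord0 i - nx * y ord0 i); rewrite !expr2; nra.
have [nz|z] := boolP (0 < nx * ny).
  have : \sum_(i < d) x ord0 i * y ord0 i <= nx * ny.
    have h2 : 0 < 2 * (nx * ny) by apply: mulr_gt0.
    rewrite -(ler_pM2l h2); apply: (le_trans key); rewrite !expr2; lra.
  by [].
have e : nx * ny = 0 by apply/eqP; move: z; rewrite lt_def negb_and negbK => /orP[//|]; rewrite mulr_ge0.
have [ex|ey] : nx = 0 \/ ny = 0.
  by move/eqP: e; rewrite mulf_eq0 => /orP[/eqP|/eqP]; [left|right].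
  have hx : forall i, x ord0 i = 0.
    move=> i; apply/eqP; rewrite -normr_eq0 eq_le normr_ge0 andbT -ex; exact: norm2_coord.
  rewrite e big1 // => i _; by rewrite hx mul0r.
have hy : forall i, y ord0 i = 0.
  move=> i; apply/eqP; rewrite -normr_eq0 eq_le normr_ge0 andbT -ey; exact: norm2_coord.
rewrite e big1 // => i _; by rewrite hy mulr0.
Qed.

Lemma norm2D x y : norm2 (x + y) <= norm2 x + norm2 y.
Proof.
have h0 := norm2_ge0 x; have h1 := norm2_ge0 y.
rewrite -(ler_pXn2r (n:=2)) // ?nnegrE ?addr_ge0 ?norm2_ge0 //.
rewrite norm2_sq.
have -> : \sum_(i < d) (x + y) ord0 i ^+ 2 =
   \sum_(i < d) x ord0 i ^+ 2 + \sum_(i < d) y ord0 i ^+ 2 + 2 * \sum_(i < d) x ord0 i * y ord0 i.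
  rewrite mulr_sumr -!big_split /=; apply: eq_bigr => i _; rewrite mxE; ring.
rewrite -!norm2_sq; have := cauchy_schwarz x y; nra.
Qed.

Lemma norm2B x y z : norm2 (x - z) <= norm2 (x - y) + norm2 (y - z).
Proof. by have := norm2D (x - y) (y - z); rewrite addrA subrK. Qed.

End N2.
Section Cnt.
Variables (R : realType) (d B : nat) (blk : 'I_d -> 'I_B).
Implicit Types z : 'rV[R]_d.

Lemma beats_irr z i : ~~ beats z i i.
Proof. by rewrite /beats ltxx ltnn andbF. Qed.

Lemma beats_total z i j : i != j -> beats z i j || beats z j i.
Proof.
move=> nij; rewrite /beats.
case: (ltgtP `|z ord0 j| `|z ord0 i|) => //= h.
case: (ltngtP i j) => // e.
by move: nij; rewrite (val_inj e) eqxx.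
Qed.

Lemma beats_trans z i j k : beats z k j -> beats z j i -> beats z k i.
Proof.
rewrite /beats => /orP[h1|/andP[/eqP h1 h1']] /orP[h2|/andP[/eqP h2 h2']].
- by rewrite (lt_trans h2 h1).
- by rewrite -h2 h1.
- by rewrite h1 h2.
- by rewrite h1 h2 eqxx (ltn_trans h1' h2') orbT.
Qed.

Definition rank z i := #|[set j | (blk j == blk i) && beats z j i]|.

Lemma rank_lt z i j : blk j = blk i -> beats z j i -> (rank z j < rank z i)%N.
Proof.
move=> bji bt; apply: proper_card; apply/properP; split.
  apply/fintype.subsetP => k; rewrite !inE => /andP[/eqP -> h]; rewrite bji eqxx /=.
  exact: beats_trans h bt.
exists j; first by rewrite inE bji eqxx bt.
by rewrite inE (negbTE (beats_irr z j)) andbF.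
Qed.

Lemma card_bound (S : {pred 'I_d}) (rk : 'I_d -> nat) n :
  {in S &, injective rk} -> (forall i, i \in S -> (rk i < n)%N) -> (#|S| <= n)%N.
Proof.
move=> inj hlt.
rewrite cardE -(size_map rk) -[n](size_iota 0).
apply: uniq_leq_size.
  rewrite map_inj_in_uniq ?enum_uniq // => x y; rewrite !mem_enum; exact: inj.
move=> x /mapP [y]; rewrite mem_enum => yS ->; rewrite mem_iota /= add0n; exact: hlt.
Qed.

Lemma FLT01 alpha z i : FLT blk alpha z ord0 i = 0 \/ FLT blk alpha z ord0 i = 1.
Proof. by rewrite /FLT mxE; case: ifP; [right|left]. Qed.

Lemma FLT_sum alpha z : 0 < alpha ->
  \sum_(i < d) FLT blk alpha z ord0 i <= d%:R * alpha + B%:R.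
Proof.
move=> a0.
rewrite (partition_big blk predT) //=.
set n := fun k : 'I_B => #|[set j | blk j == k]|.
have hsum : \sum_(k < B) (n k)%:R = d%:R :> R.
  rewrite -natr_sum; congr (_%:R).
  rewrite -[in RHS](card_ord d) -sum1_card (partition_big blk predT) //=.
  apply: eq_bigr => k _; rewrite /n -sum1_card; apply: eq_bigl => j.
  by rewrite inE.
have -> : d%:R * alpha + B%:R = \sum_(k < B) ((n k)%:R * alpha + 1) :> R.
  rewrite big_split /= -mulr_suml hsum sumr_const card_ord; done.
apply: ler_sum => k _.
set c := Num.ceil ((n k)%:R * alpha).
have c0 : (0 <= c)%R.
  rewrite /c ceil_ge0; have : 0 <= (n k)%:R * alpha by rewrite mulr_ge0 // ltW.
  lra.
have cl : (c%:~R < (n k)%:R * alpha + 1 :> R).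
  have /andP[h _] := ceil_itv ((n k)%:R * alpha); rewrite -/c in h.
  move: h; rewrite rmorphB /= => h; lra.
pose S := [pred i | (blk i == k) && ((rank z i)%:Z < c)%R].
have -> : \sum_(i < d | blk i == k) FLT blk alpha z ord0 i = (#|S|)%:R.
  rewrite big_mkcond /= -sum1_card natr_sum [RHS]big_mkcond /=; apply: eq_bigr => i _.
  rewrite /S inE /FLT mxE /=; case: eqP => [e|] //=.
  by rewrite /block_size e /rank e; case: ifP.
have cc : c = (`|c|%N)%:Z by rewrite gez0_abs.
have hb : (#|S| <= `|c|%N)%N.
  apply: (@card_bound S (rank z)).
    move=> i j; rewrite !inE => /andP[/eqP bi _] /andP[/eqP bj _] eqr.
    apply/eqP; apply/negPn/negP => nij.
    have e : blk j = blk i by rewrite bi bj.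
    case/orP: (beats_total z i j nij) => h.
      by have := rank_lt z j i (esym e) h; rewrite eqr ltnn.
    by have := rank_lt z i j e h; rewrite eqr ltnn.
  by move=> i; rewrite inE => /andP[_]; rewrite {1}cc ltz_nat.
apply: (le_trans (y := (`|c|%N)%:R)); first by rewrite ler_nat.
by apply: ltW; rewrite -[X in X < _]/((`|c|%N)%:Z%:~R) -cc.
Qed.
End Cnt.
Section Fin.
Variable R : realType.

Lemma final_scalar (a mh vh X Q b1 b2 : R) :
  0 < b1 < 1 -> 0 < b2 < 1 -> 0 <= X ->
  `|mh - a| <= 2 * Num.sqrt 2 * b1 * X ->
  (1 - b2) * a ^+ 2 <= vh ->
  vh * (1 - b2) <= (`|a| + Q) ^+ 2 ->
  0 <= Q -> Q <= 4 * X / (1 - b2) ->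
  (if vh == 0 then 0 else a * (mh / Num.sqrt vh))
    >= Num.sqrt (1 - b2) *
       (`|a| - (2 * Num.sqrt 2 * b1 / (1 - b1) ^+ 2 + 4 / (1 - b2)) * X).
Proof.
move=> /andP[b1p b1l] /andP[b2p b2l] X0 hM hv1 hv2 Q0 hQ.
set M := 2 * Num.sqrt 2 * b1 * X in hM.
set c1 := 2 * Num.sqrt 2 * b1 / (1 - b1) ^+ 2.
set sb := Num.sqrt (1 - b2).
have sbp : 0 < sb by rewrite sqrtr_gt0 subr_gt0.
have sb2 : sb ^+ 2 = 1 - b2 by rewrite sqr_sqrtr //; lra.
have sbl : sb <= 1 by rewrite /sb -[X in _ <= X]sqrtr1 ler_sqrt //; lra.
have s2 : Num.sqrt 2 <= 2 :> R.
  apply: (le_trans (y := Num.sqrt (2 ^+ 2))); last by rewrite sqrtr_sqr ger0_norm.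
  rewrite ler_sqrt ?expr2; lra.
have s20 : 0 <= Num.sqrt 2 :> R by apply: sqrtr_ge0.
have M0 : 0 <= M by rewrite /M !mulr_ge0 //; lra.
have M4 : M <= 4 * X.
  have h : 2 * Num.sqrt 2 * b1 <= 4 :> R by nra.
  by rewrite /M; apply: ler_wpM2r.
have Mc1 : M <= c1 * X.
  rewrite /M /c1 ler_wpM2r //.
  have h1 : 0 < (1 - b1) ^+ 2 by rewrite exprn_gt0 //; lra.
  rewrite ler_pdivlMr //.
  have h2 : (1 - b1) ^+ 2 <= 1 by rewrite expr2; nra.
  have h3 : 0 <= 2 * Num.sqrt 2 * b1 by rewrite !mulr_ge0 //; lra.
  by rewrite -[X in _ <= X]mulr1 ler_wpM2l.
have c1X : 0 <= c1 * X by lra.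
set K := c1 + 4 / (1 - b2).
have KX : K * X = c1 * X + 4 * X / (1 - b2) by rewrite /K; ring.
have i1b : 0 < 1 - b2 by lra.
have Q4 : 0 <= 4 * X / (1 - b2) by rewrite divr_ge0 //; lra.
have a2 : 0 <= a ^+ 2 by apply: sqr_ge0.
have vh0 : 0 <= vh by nra.
case: eqP => [e|ne].
  have a0 : a = 0.
    move: hv1; rewrite e => h.
    have : a ^+ 2 <= 0 by nra.

    by move=> h0; apply/eqP; rewrite -sqrf_eq0 eq_le h0 a2.
  rewrite a0 normr0 sub0r mulrN oppr_le0; apply: mulr_ge0; lra.
have vhp : 0 < vh by rewrite lt_def vh0 andbT; apply/eqP.
set s := Num.sqrt vh.
have sp : 0 < s by rewrite sqrtr_gt0.
have s2v : s ^+ 2 = vh by rewrite sqr_sqrtr // ltW.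
have KX0 : 0 <= K * X by lra.
have -> : a * (mh / s) = (a * mh) / s by rewrite mulrA.
have [N0|N0] := leP 0 (a * mh).
  have sle : sb * s <= `|a| + Q.
    rewrite -(ler_pXn2r (n := 2)) ?nnegrE ?mulr_ge0 ?addr_ge0 //; try lra.
    by rewrite exprMn sb2 s2v mulrC.
  have Nlb : `|a| * (`|a| - M) <= a * mh.
    have : `|a| * `|mh - a| <= `|a| * M by rewrite ler_wpM2l.
    have : - (a * (mh - a)) <= `|a| * `|mh - a|.
      by rewrite -normrM; apply: (le_trans (ler_norm _)); rewrite normrN.
    have : `|a| * `|a| = a * a by rewrite -normrM ger0_norm // -expr2.
    lra.
  have [small|big] := leP (`|a|) (M + Q).
    apply: (le_trans (y := 0)); last by rewrite divr_ge0 // ltW.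
    have h1 : `|a| - K * X <= 0 by lra.
    by apply: mulr_ge0_le0 => //; apply: ltW.
  rewrite ler_pdivlMr //.
  have ss0 : 0 < sb * s by apply: mulr_gt0.
  have e1 : sb * (`|a| - K * X) * s <= (`|a| - M - Q) * (sb * s).
    have h : `|a| - K * X <= `|a| - M - Q by lra.
    have := ler_wpM2r (ltW ss0) h; lra.
  have e2 : (`|a| - M - Q) * (sb * s) <= (`|a| - M - Q) * (`|a| + Q).
    apply: ler_wpM2l => //; lra.
  have e3 : (`|a| - M - Q) * (`|a| + Q) <= `|a| * (`|a| - M).
    have : 0 <= M * Q + Q * Q by rewrite addr_ge0 // mulr_ge0.
    lra.
  lra.
have nn : forall x : R, `|x| * `|x| = x * x.
  by move=> x; rewrite -normrM ger0_norm // -expr2 sqr_ge0.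
have amh : a * mh = - (`|a| * `|mh|).
  by rewrite -normrM ltr0_norm ?opprK.
have sum_le : `|mh| + `|a| <= M.
  apply: le_trans hM.
  rewrite -(ler_pXn2r (n := 2)) ?nnegrE ?addr_ge0 //.
  rewrite !expr2 nn mulrDl !mulrDr nn [`|a| * `|mh|]mulrC.
  have : `|a| * `|mh| = - (a * mh) by rewrite amh opprK.
  have := nn a; have := nn mh; lra.
have sa : sb * `|a| <= s.
  have sb0 := ltW sbp; have s0 := ltW sp.
  rewrite -(ler_pXn2r (n := 2)) ?nnegrE ?mulr_ge0 //.
  by rewrite exprMn sb2 s2v real_normK // num_real.
have Z0' : `|a| - K * X <= 0.
  have : (1 - b2) * (K * X) = (1 - b2) * (c1 * X) + 4 * X.
    by rewrite KX mulrDr; congr (_ + _); rewrite mulrC divfK // gt_eqF.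
  have : 0 <= (1 - b2) * (c1 * X) by apply: mulr_ge0; lra.
  have : (1 - b2) * (K * X) <= K * X by rewrite ler_piMl //; lra.
  have := normr_ge0 mh.
  lra.
have Z0 : sb * (`|a| - K * X) <= 0 by apply: mulr_ge0_le0 => //; exact: ltW.
rewrite ler_pdivlMr //.
apply: (le_trans (ler_wnM2l Z0 sa)).
have br : (1 - b2) * (`|a| - K * X) + `|mh| <= 0.
  have : (1 - b2) * (K * X) = (1 - b2) * (c1 * X) + 4 * X.
    by rewrite KX mulrDr; congr (_ + _); rewrite mulrC divfK // gt_eqF.
  have : 0 <= (1 - b2) * (c1 * X) by apply: mulr_ge0; lra.
  have : (1 - b2) * `|a| <= `|a| by rewrite ler_piMl //; lra.
  lra.
have := ler_wpM2l (normr_ge0 a) br.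
rewrite amh mulr0.
have -> : sb * (`|a| - K * X) * (sb * `|a|) = sb ^+ 2 * (`|a| - K * X) * `|a| by ring.
rewrite sb2; lra.
Qed.
End Fin.
Section S2.
Variable R : realType.

Lemma upd_scalar (M V p1 p2 Rb : R) : 0 < p1 -> 0 < p2 <= 1 -> 0 <= V ->
  `|M| <= p1 * Rb * Num.sqrt V -> p2^-1 * V != 0 ->
  ((p1^-1 * M) / Num.sqrt (p2^-1 * V)) ^+ 2 <= Rb ^+ 2.
Proof.
move=> p1p /andP[p2p p2l] V0 hM hne.
have vhp : 0 < p2^-1 * V by rewrite lt_def hne mulr_ge0 // invr_ge0 ltW.
rewrite expr_div_n sqr_sqrtr ?(ltW vhp) // ler_pdivrMr //.
have sV0 : 0 <= Num.sqrt V by apply: sqrtr_ge0.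
have h1 : `|p1^-1 * M| <= Rb * Num.sqrt V.
  by rewrite normrM ger0_norm ?invr_ge0 ?(ltW p1p) // ler_pdivrMl // mulrA.
have Rb0 : 0 <= Rb * Num.sqrt V by apply: le_trans h1.
have h2 : (p1^-1 * M) ^+ 2 <= Rb ^+ 2 * V.
  rewrite -real_normK ?num_real // -(sqr_sqrtr V0) -exprMn.
  by rewrite ler_pXn2r ?nnegrE.
apply: (le_trans h2); apply: ler_wpM2l; first exact: sqr_ge0.
rewrite -[X in X <= _]mul1r ler_wpM2r // invr_ge1 //; last exact: unitf_gt0.
Qed.

Lemma tele (n : nat) : 1 / Num.sqrt (n.+1%:R) <= 2 * (Num.sqrt (n.+1%:R) - Num.sqrt (n%:R)) :> R.
Proof.
set a := Num.sqrt _; set b := Num.sqrt _.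
have ap : 0 < a by rewrite sqrtr_gt0 ltr0n.
have b0 : 0 <= b by apply: sqrtr_ge0.
have a2 : a ^+ 2 = n%:R + 1 by rewrite sqr_sqrtr // -natr1.
have b2 : b ^+ 2 = n%:R by rewrite sqr_sqrtr.
rewrite ler_pdivrMr // -subr_ge0.
have : 0 <= (a - b) ^+ 2 by apply: sqr_ge0.
move: a2 b2; rewrite !expr2 => a2 b2; nra.
Qed.

Lemma sqrt_diff (x y : nat) : (y <= x)%N ->
  Num.sqrt (x%:R) - Num.sqrt (y%:R) <= Num.sqrt 2 * (x%:R - y%:R) / Num.sqrt (x.+1%:R) :> R.
Proof.
move=> yx.
set sx := Num.sqrt (x%:R); set sy := Num.sqrt (y%:R).
have sx0 : 0 <= sx by apply: sqrtr_ge0.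
have sy0 : 0 <= sy by apply: sqrtr_ge0.
have sx2 : sx ^+ 2 = x%:R by rewrite sqr_sqrtr.
have sy2 : sy ^+ 2 = y%:R by rewrite sqr_sqrtr.
have sp : 0 < Num.sqrt (x.+1%:R) :> R by rewrite sqrtr_gt0 ltr0n.
rewrite ler_pdivlMr //.
case: (posnP x) => [x0|xp].
  move: yx; rewrite x0 leqn0 => /eqP y0.
  by rewrite /sx /sy x0 y0 !subrr mul0r mulr0.
have xyr : (y%:R <= x%:R :> R) by rewrite ler_nat.
have sxp : 0 < sx by rewrite sqrtr_gt0 ltr0n.
have hs : Num.sqrt (x.+1%:R) <= Num.sqrt 2 * sx :> R.
  rewrite /sx -sqrtrM // ler_sqrt ?mulr_ge0 // -natr1.
  have : (1 <= x%:R :> R) by rewrite ler1n.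
  lra.
have h1 : (sx - sy) * sx <= x%:R - y%:R.
  have : (sx - sy) * (sx + sy) = x%:R - y%:R by rewrite -sx2 -sy2; ring.
  have : 0 <= (sx - sy) * sy.
    apply: mulr_ge0 => //; rewrite subr_ge0 /sx /sy ler_sqrt //.
  nra.
have d0 : 0 <= sx - sy by rewrite subr_ge0 /sx /sy ler_sqrt //.
apply: (le_trans (ler_wpM2l d0 hs)).
have s20 : 0 <= Num.sqrt 2 :> R by apply: sqrtr_ge0.
have := ler_wpM2l s20 h1.
lra.
Qed.

End S2.
Section S3.
Variable R : realType.

Lemma p_step (b1 w Mp G a c p T : R) : 0 < b1 < 1 -> w * (1 - b1) = b1 -> 0 <= w ->
  0 <= p <= 1 -> 0 <= c -> 0 <= T ->
  `|Mp - (1 - p) * a| <= c * ((1 - p) * (T + 1) + (1 - p) * w) ->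
  `|G - a| <= c * T ->
  `|b1 * Mp + (1 - b1) * G - (1 - b1 * p) * a| <= c * ((1 - b1 * p) * T + (1 - b1 * p) * w).
Proof.
move=> /andP[b1p b1l] hw w0 /andP[p0 p1] c0 T0 hM hG.
have -> : b1 * Mp + (1 - b1) * G - (1 - b1 * p) * a =
   b1 * (Mp - (1 - p) * a) + (1 - b1) * (G - a) by ring.
apply: (le_trans (ler_normD _ _)).
rewrite !normrM (ger0_norm (ltW b1p)) (ger0_norm (_ : 0 <= 1 - b1)); last lra.
have e1 := ler_wpM2l (ltW b1p) hM.
have e2 : (1 - b1) * `|G - a| <= (1 - b1) * (c * T) by apply: ler_wpM2l; lra.
have e : c * (1 - p) * (w * (1 - b1)) = c * (1 - p) * b1 by rewrite hw.
have nn : 0 <= c * w * p * (1 - b1) by rewrite !mulr_ge0 //; lra.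
lra.
Qed.

Lemma v_step (b2 V G a c h h' T : R) : 0 < b2 < 1 -> 0 <= c -> 0 <= T -> 0 <= h ->
  b2 * h + (1 - b2) * T ^+ 2 <= h' ->
  V <= (`|a| + c * Num.sqrt h) ^+ 2 -> `|G - a| <= c * T ->
  b2 * V + (1 - b2) * (G * G) <= (`|a| + c * Num.sqrt h') ^+ 2.
Proof.
move=> /andP[b2p b2l] c0 T0 h0 hh hV hG.
set P := c * Num.sqrt h in hV *; set Rr := c * T in hG *.
set S := c * Num.sqrt (b2 * h + (1 - b2) * T ^+ 2).
have hx0 : 0 <= b2 * h + (1 - b2) * T ^+ 2.
  apply: addr_ge0; apply: mulr_ge0; try lra; exact: sqr_ge0.
have P0 : 0 <= P by rewrite mulr_ge0 ?sqrtr_ge0.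
have R0 : 0 <= Rr by rewrite mulr_ge0.
have S0 : 0 <= S by rewrite mulr_ge0 ?sqrtr_ge0.
have S2 : S ^+ 2 = b2 * P ^+ 2 + (1 - b2) * Rr ^+ 2.
  by rewrite /S /P /Rr !exprMn !sqr_sqrtr //; ring.
have SS : S <= c * Num.sqrt h'.
  by apply: ler_wpM2l => //; rewrite ler_sqrt // (le_trans hx0).
have a0 := normr_ge0 a.
clearbody P Rr S.
have G2 : G * G <= (`|a| + Rr) ^+ 2.
  have : `|G| <= `|a| + Rr.
    have := ler_normD (G - a) a; rewrite subrK. lra.
  move=> hGa; rewrite -expr2 -(real_normK (num_real G)) ler_pXn2r ?nnegrE ?addr_ge0 //.
have mix : b2 * P + (1 - b2) * Rr <= S.
  have L0 : 0 <= b2 * P + (1 - b2) * Rr.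
    apply: addr_ge0; apply: mulr_ge0 => //; try lra.
  rewrite -(ler_pXn2r (n := 2)) ?nnegrE // S2.
  have : 0 <= b2 * (1 - b2) * (P - Rr) ^+ 2.
    by apply: mulr_ge0; [apply: mulr_ge0; lra | exact: sqr_ge0].
  rewrite !expr2; lra.
apply: (le_trans (y := (`|a| + S) ^+ 2)); last first.
  by rewrite ler_pXn2r ?nnegrE ?addr_ge0 ?mulr_ge0 ?sqrtr_ge0 // lerD2l.
have e1 : b2 * V <= b2 * (`|a| + P) ^+ 2 by apply: ler_wpM2l => //; lra.
have e2 : (1 - b2) * (G * G) <= (1 - b2) * (`|a| + Rr) ^+ 2 by apply: ler_wpM2l => //; lra.
have e3 : 0 <= `|a| * (S - (b2 * P + (1 - b2) * Rr)) by rewrite mulr_ge0 // subr_ge0.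
move: S2 e1 e2 e3; rewrite !expr2; lra.
Qed.

Lemma h_rec (b2 T : R) : 0 < b2 < 1 ->
  let A := 2 * b2 / (1 - b2) in let D := b2 * (1 + b2) / (1 - b2) ^+ 2 in
  b2 * ((T + 1) ^+ 2 + A * (T + 1) + D) + (1 - b2) * T ^+ 2 = T ^+ 2 + A * T + D.
Proof.
move=> /andP[b2p b2l] A D; rewrite /A /D.
have h : 1 - b2 != 0 by rewrite gt_eqF //; lra.
field; exact: h.
Qed.

End S3.
Section S.
Variables (R : realType) (d B : nat) (blk : 'I_d -> 'I_B)
  (f : 'rV[R]_d -> R) (alpha b1 b2 : R) (eta : nat -> R) (th0 : 'rV[R]_d).

Local Notation th := (mofo_theta blk f alpha b1 b2 eta th0).
Local Notation m := (mofo_m blk f alpha b1 b2 eta th0).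
Local Notation v := (mofo_v blk f alpha b1 b2 eta th0).
Local Notation g := (mofo_g blk f alpha b1 b2 eta th0).
Local Notation mh := (mofo_mhat blk f alpha b1 b2 eta th0).
Local Notation vh := (mofo_vhat blk f alpha b1 b2 eta th0).

Lemma mS t : m t.+1 = b1 *: m t + (1 - b1) *: g t.+1.
Proof.
rewrite /mofo_m /mofo_g /mofo_theta /=.
by case: (mofo_state _ _ _ _ _ _ _ t) => [[a b] c].
Qed.

Lemma vS t : v t.+1 = b2 *: v t + (1 - b2) *: map2_mx (fun a b => a * b) (g t.+1) (g t.+1).
Proof.
rewrite /mofo_v /mofo_g /mofo_theta /=.
by case: (mofo_state _ _ _ _ _ _ _ t) => [[a b] c].
Qed.

Definition upd t := \row_(i < d)
       (if vh t ord0 i == 0 then 0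
        else mh t ord0 i * FLT blk alpha (m t) ord0 i / Num.sqrt (vh t ord0 i)).

Lemma thS t : th t.+1 = th t - eta t.+1 *: upd t.+1.
Proof.
rewrite /upd /mofo_vhat /mofo_mhat /mofo_v /mofo_m /mofo_theta /=.
by case: (mofo_state _ _ _ _ _ _ _ t) => [[a b] c].
Qed.

End S.
Lemma mxE_lin (R : realType) (d : nat) (x y : 'rV[R]_d) (p q : R) j :
  (p *: x + q *: y) ord0 j = p * x ord0 j + q * y ord0 j.
Proof. by rewrite !mxE. Qed.

Lemma mxE_lin2 (R : realType) (d : nat) (x y : 'rV[R]_d) (p q : R) j :
  (p *: x + q *: map2_mx (fun a b => a * b) y y) ord0 j = p * x ord0 j + q * (y ord0 j * y ord0 j).
Proof. by rewrite !mxE. Qed.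

Section Dyn.
Variables (R : realType) (d B : nat) (blk : 'I_d -> 'I_B)
  (f : 'rV[R]_d -> R) (alpha b1 b2 : R) (eta : nat -> R) (th0 : 'rV[R]_d).
Hypotheses (hb1 : 0 < b1 < 1) (hb2 : 0 < b2 < 1) (hq : b1 < Num.sqrt b2) (ha : 0 < alpha).

Local Notation th := (mofo_theta blk f alpha b1 b2 eta th0).
Local Notation m := (mofo_m blk f alpha b1 b2 eta th0).
Local Notation v := (mofo_v blk f alpha b1 b2 eta th0).
Local Notation g := (mofo_g blk f alpha b1 b2 eta th0).
Local Notation mh := (mofo_mhat blk f alpha b1 b2 eta th0).
Local Notation vh := (mofo_vhat blk f alpha b1 b2 eta th0).

Definition Rb := (1 - b1) / (Num.sqrt (1 - b2) * (1 - b1 / Num.sqrt b2)).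

Lemma Rb_ge0 : 0 <= Rb.
Proof.
rewrite /Rb; case/andP: hb1 => h1 h2; case/andP: hb2 => h3 h4.
have s2p : 0 < Num.sqrt b2 by rewrite sqrtr_gt0.
apply: divr_ge0; first lra.
apply: mulr_ge0; first exact: sqrtr_ge0.
rewrite subr_ge0 ler_pdivrMr // mul1r; exact: ltW.
Qed.

Lemma m0 : m 0 = 0. Proof. by []. Qed.
Lemma v0 : v 0 = 0. Proof. by []. Qed.

Lemma mv_inv r j : 0 <= v r ord0 j /\
  `|m r ord0 j| <= (1 - b1 ^+ r) * Rb * Num.sqrt (v r ord0 j).
Proof.
elim: r => [|r [IHv IHm]].
  by rewrite m0 v0 !mxE normr0 expr0 subrr !mul0r.
rewrite mS vS !mxE; split.
  case/andP: hb2 => h3 h4.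
  apply: addr_ge0; apply: mulr_ge0; try lra; rewrite -expr2; exact: sqr_ge0.
rewrite exprS.
apply: step_m => //.
have [h1 h2] := andP hb1.
apply/andP; split; first by apply: exprn_ge0; lra.
by apply: exprn_ile1; lra.
Qed.

Lemma v_lb n j : (1 - b2) * (g n.+1 ord0 j * g n.+1 ord0 j) <= v n.+1 ord0 j.
Proof.
have [h3 h4] := andP hb2.
rewrite vS mxE_lin2 lerDr; apply: mulr_ge0; [lra | exact: (mv_inv n j).1].
Qed.

Local Notation U := (@upd R d B blk f alpha b1 b2 eta th0).

Lemma upd_sq r j : (U r ord0 j) ^+ 2 <= Rb ^+ 2 * FLT blk alpha (m r) ord0 j.
Proof.
have [h1 h2] := andP hb1; have [h3 h4] := andP hb2.
have F0 : 0 <= FLT blk alpha (m r) ord0 j by case: (@FLT01 R d B blk alpha (m r) j) => ->; lra.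
rewrite /upd mxE; case: eqP => [_|ne].
  by rewrite expr0n /= mulr_ge0 // sqr_ge0.
case: (@FLT01 R d B blk alpha (m r) j) => ->.
  by rewrite mulr0 mul0r expr0n /= mulr0.
rewrite mulr1 mulr1.
clear F0; case: r ne => [|r] ne.
  by exfalso; apply: ne; rewrite /mofo_vhat v0 !mxE mulr0.
have [V0 hM] := mv_inv r.+1 j.
rewrite /mofo_mhat /mofo_vhat !mxE.
apply: upd_scalar => //.
- by rewrite subr_gt0 exprn_ilt1 //; lra.
- apply/andP; split; first by rewrite subr_gt0 exprn_ilt1 //; lra.
  by rewrite lerBlDr lerDl exprn_ge0 //; lra.
- by move: ne; rewrite /mofo_vhat !mxE => /eqP.
Qed.

Lemma norm_upd r : norm2 (U r) <= Rb * Num.sqrt (d%:R * alpha + B%:R).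
Proof.
have Rb0 := Rb_ge0.
rewrite /norm2 -(ger0_norm Rb0) -sqrtr_sqr -sqrtrM ?sqr_ge0 // ler_sqrt; last first.
  by rewrite mulr_ge0 ?sqr_ge0 // addr_ge0 // mulr_ge0 // ltW.
apply: (le_trans (y := \sum_(i < d) Rb ^+ 2 * FLT blk alpha (m r) ord0 i)).
  by apply: ler_sum => i _; apply: upd_sq.
rewrite -mulr_sumr; apply: ler_wpM2l; first exact: sqr_ge0.
exact: FLT_sum.
Qed.

Lemma step_bound r : norm2 (th r - th r.+1) <= `|eta r.+1| * (Rb * Num.sqrt (d%:R * alpha + B%:R)).
Proof.
rewrite thS opprB addrC subrK norm2Z; apply: ler_wpM2l => //; exact: norm_upd.
Qed.

End Dyn.

Lemma norm2_0 (R : realType) (d : nat) : norm2 (0 : 'rV[R]_d) = 0.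
Proof. by rewrite /norm2 big1 ?sqrtr0 // => i _; rewrite mxE expr0n. Qed.

Lemma coordB (R : realType) (d : nat) (x y : 'rV[R]_d) j :
  `|x ord0 j - y ord0 j| <= norm2 (x - y).
Proof.
have -> : x ord0 j - y ord0 j = (x - y) ord0 j by rewrite !mxE.
exact: norm2_coord.
Qed.

Section Dyn2.
Variables (R : realType) (d B : nat) (blk : 'I_d -> 'I_B)
  (f : 'rV[R]_d -> R) (alpha b1 b2 eta0 : R) (th0 : 'rV[R]_d).
Hypotheses (hb1 : 0 < b1 < 1) (hb2 : 0 < b2 < 1) (hq : b1 < Num.sqrt b2) (ha : 0 < alpha)
  (he : 0 < eta0).
Let etas := fun t : nat => eta0 / Num.sqrt (t%:R).
Local Notation th := (mofo_theta blk f alpha b1 b2 etas th0).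
Let W := @Rb R b1 b2 * Num.sqrt (d%:R * alpha + B%:R).

Lemma W_ge0 : 0 <= W.
Proof. by rewrite /W mulr_ge0 ?sqrtr_ge0 // (@Rb_ge0 R b1 b2 hb1 hb2 hq). Qed.

Lemma dist_bound s k : norm2 (th s - th (s + k)) <=
   2 * eta0 * W * (Num.sqrt ((s + k)%:R) - Num.sqrt (s%:R)).
Proof.
elim: k => [|k IH].
  by rewrite addn0 subrr norm2_0 subrr mulr0.
apply: (le_trans (@norm2B _ _ _ (th (s + k)) _)).
rewrite addnS.
have := @step_bound R d B blk f alpha b1 b2 etas th0 hb1 hb2 hq ha (s + k).
rewrite /etas ger0_norm; last by rewrite divr_ge0 ?sqrtr_ge0 // ltW.
move=> hs.
have tl := @tele R (s + k).
have W0 := W_ge0.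
have e1 : eta0 / Num.sqrt ((s + k).+1%:R) * W <= 2 * eta0 * W * (Num.sqrt ((s + k).+1%:R) - Num.sqrt ((s + k)%:R)).
  have := ler_wpM2l (mulr_ge0 (ltW he) W0) tl.
  rewrite mul1r; lra.
rewrite -/W in hs.
lra.
Qed.

Variable Lc : R.
Hypothesis hL : forall x y : 'rV[R]_d,
     norm2 (gradient f x - gradient f y) <= Lc * norm2 (x - y).
Hypothesis hL0 : 0 <= Lc.
Local Notation g := (mofo_g blk f alpha b1 b2 etas th0).
Local Notation m := (mofo_m blk f alpha b1 b2 etas th0).
Local Notation v := (mofo_v blk f alpha b1 b2 etas th0).

Definition cc (t : nat) := 2 * Num.sqrt 2 * Lc * eta0 * W / Num.sqrt (t%:R).

Lemma cc_ge0 t : 0 <= cc t.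
Proof.
rewrite /cc; apply: divr_ge0 (sqrtr_ge0 _); apply: (mulr_ge0 _ W_ge0).
apply: (mulr_ge0 _ (ltW he)); apply: (mulr_ge0 _ hL0); apply: (mulr_ge0 _ (sqrtr_ge0 _)); lra.
Qed.

Lemma gdiff s t j : (s < t)%N ->
  `|g s.+1 ord0 j - g t ord0 j| <= cc t * (t - s.+1)%:R.
Proof.
move=> st.
have -> : t = (s + (t - s.+1)).+1 by rewrite -addSn subnKC.
set k := (t - s.+1)%N.
rewrite subSS addKn.
apply: (le_trans (@coordB _ _ (g s.+1) (g (s + k).+1) j)).
apply: (le_trans (hL _ _)).
have hd := dist_bound s k.
have hs := @sqrt_diff R (s + k) s (leq_addr _ _).
have W0 := W_ge0.
have e1 : Lc * norm2 (th s - th (s + k)) <=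
   Lc * (2 * eta0 * W * (Num.sqrt 2 * ((s + k)%:R - s%:R) / Num.sqrt ((s + k).+1%:R))).
  apply: ler_wpM2l => //; apply: (le_trans hd); apply: ler_wpM2l => //.
  by apply: (mulr_ge0 _ W0); apply: (mulr_ge0 _ (ltW he)); lra.
apply: (le_trans e1).
rewrite /cc natrD addrAC subrr add0r.
by rewrite le_eqVlt; apply/orP; left; apply/eqP; ring.
Qed.

Variables (t : nat) (i : 'I_d).
Let a := g t ord0 i.
Let c := cc t.
Let w := b1 / (1 - b1).

Lemma P_inv s : (s <= t)%N ->
  `|m s ord0 i - (1 - b1 ^+ s) * a| <= c * ((1 - b1 ^+ s) * (t - s)%:R + (1 - b1 ^+ s) * w).
Proof.
have [h1 h2] := andP hb1.
elim: s => [|s IH] st.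
  by rewrite m0 mxE expr0 subrr !mul0r subrr normr0 add0r mulr0.
have IH' := IH (ltnW st).
rewrite mS mxE_lin exprS.
have e : (t - s)%:R = (t - s.+1)%:R + 1 :> R by rewrite -subnSK // -addn1 natrD.
rewrite e in IH'.
apply: p_step => //.
- by rewrite /w divfK // gt_eqF //; lra.
- by rewrite /w divr_ge0 //; lra.
- apply/andP; split; first by apply: exprn_ge0; lra.
  by apply: exprn_ile1; lra.
- exact: cc_ge0.
- exact: gdiff.
Qed.

Let A := 2 * b2 / (1 - b2).
Let D := b2 * (1 + b2) / (1 - b2) ^+ 2.
Let h (n : nat) := (n%:R) ^+ 2 + A * n%:R + D.

Lemma V_inv s : (s <= t)%N -> v s ord0 i <= (`|a| + c * Num.sqrt (h (t - s))) ^+ 2.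
Proof.
have [h1 h2] := andP hb2.
have A0 : 0 <= A by rewrite /A divr_ge0 //; lra.
have D0 : 0 <= D by rewrite /D divr_ge0 ?sqr_ge0 // mulr_ge0 //; lra.
elim: s => [|s IH] st.
  by rewrite v0 mxE sqr_ge0.
have IH' := IH (ltnW st).
rewrite vS mxE_lin2.
apply: (@v_step R _ _ _ _ _ (h (t - s)) (h (t - s.+1)) (t - s.+1)%:R) => //.
- exact: cc_ge0.
- rewrite /h; apply: addr_ge0 => //; apply: addr_ge0; [exact: sqr_ge0|exact: mulr_ge0].
- have e : (t - s)%:R = (t - s.+1)%:R + 1 :> R by rewrite -subnSK // -addn1 natrD.
  have hr := @h_rec R b2 ((t - s.+1)%:R) hb2; simpl in hr.
  by rewrite /h e /A /D hr.
- exact: gdiff.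
Qed.

End Dyn2.
Theorem lemma4 (R : realType) (d B : nat) (blk : 'I_d -> 'I_B)
  (f : 'rV[R]_d -> R) (Lc alpha beta1 beta2 eta : R) (theta0 : 'rV[R]_d) :
  (forall k : 'I_B, exists i : 'I_d, blk i = k) ->
  (forall x : 'rV[R]_d, differentiable f x) ->
  (forall x y : 'rV[R]_d,
     norm2 (gradient f x - gradient f y) <= Lc * norm2 (x - y)) ->
  0 < alpha <= 1 ->
  0 < beta1 < 1 -> 0 < beta2 < 1 ->
  beta1 < Num.sqrt beta2 ->
  0 < eta ->
  let etas := fun t : nat => eta / Num.sqrt (t%:R) in
  let C := Num.sqrt (d%:R * alpha + B%:R) /
           (Num.sqrt (1 - beta2) * (1 - beta1 / Num.sqrt beta2)) in
  forall (t : nat) (i : 'I_d), (1 <= t)%N ->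
    let g := mofo_g blk f alpha beta1 beta2 etas theta0 t ord0 i in
    let mh := mofo_mhat blk f alpha beta1 beta2 etas theta0 t ord0 i in
    let vh := mofo_vhat blk f alpha beta1 beta2 etas theta0 t ord0 i in
    (if vh == 0 then 0 else g * (mh / Num.sqrt vh))
    >= Num.sqrt (1 - beta2) *
       (`|g| - (2 * Num.sqrt 2 * beta1 / (1 - beta1) ^+ 2 + 4 / (1 - beta2))
               * Lc * C * eta / Num.sqrt (t%:R)).
Proof.
move=> _ _ hL /andP[ha _] hb1 hb2 hq he etas C t i ht; cbv zeta.
set g := mofo_g _ _ _ _ _ _ _ _ _ _. set mh := mofo_mhat _ _ _ _ _ _ _ _ _ _. set vh := mofo_vhat _ _ _ _ _ _ _ _ _ _.
have [h1 h2] := andP hb1; have [h3 h4] := andP hb2.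
have hL0 : 0 <= Lc.
  have := hL 0 (delta_mx ord0 i).
  rewrite sub0r norm2N => hh.
  have n1 : 1 <= norm2 (delta_mx ord0 i : 'rV[R]_d).
    by have := @norm2_coord R d (delta_mx ord0 i) i; rewrite mxE !eqxx /= normr1.
  have := le_trans (norm2_ge0 _ _ _) hh.
  rewrite pmulr_lge0 //; lra.
set X := Lc * C * eta / Num.sqrt t%:R.
have -> : (2 * Num.sqrt 2 * beta1 / (1 - beta1) ^+ 2 + 4 / (1 - beta2)) * Lc * C * eta /
     Num.sqrt t%:R = (2 * Num.sqrt 2 * beta1 / (1 - beta1) ^+ 2 + 4 / (1 - beta2)) * X.
  by rewrite /X; ring.
have hP := @P_inv R d B blk f alpha beta1 beta2 eta theta0 hb1 hb2 hq ha he Lc hL hL0 t i t (leqnn t).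
have hV := @V_inv R d B blk f alpha beta1 beta2 eta theta0 hb1 hb2 hq ha he Lc hL hL0 t i t (leqnn t).
rewrite subnn /= in hP hV.
rewrite -/g in hP hV.
set c := cc _ _ _ _ _ _ _ _ _ in hP hV.
have s1p : 0 < Num.sqrt (1 - beta2) by rewrite sqrtr_gt0; lra.
have s2p : 0 < Num.sqrt beta2 by rewrite sqrtr_gt0.
have q1 : beta1 / Num.sqrt beta2 < 1 by rewrite ltr_pdivrMr // mul1r.
have cX : c = 2 * Num.sqrt 2 * (1 - beta1) * X.
  rewrite /c /cc /X /C /Rb; field.
  have tp : 0 < Num.sqrt (t%:R) :> R by rewrite sqrtr_gt0 ltr0n.
  by apply/and4P; split; rewrite gt_eqF // subr_gt0.
have cw : c * (beta1 / (1 - beta1)) = 2 * Num.sqrt 2 * beta1 * X.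
  rewrite cX; field; rewrite gt_eqF //; lra.
have X0 : 0 <= X.
  rewrite /X /C; apply: divr_ge0; last exact: sqrtr_ge0.
  apply: mulr_ge0; last exact: ltW.
  apply: mulr_ge0 => //; apply: divr_ge0; first exact: sqrtr_ge0.
  by apply: mulr_ge0; [exact: ltW | rewrite subr_ge0 ltW].
set D := beta2 * (1 + beta2) / (1 - beta2) ^+ 2 in hV.
rewrite expr0n mulr0 !add0r /= in hV.
have D0 : 0 <= D.
  rewrite /D; apply: divr_ge0; [apply: mulr_ge0; lra|exact: sqr_ge0].
have c0 : 0 <= c.
  rewrite cX; apply: (mulr_ge0 _ X0); apply: mulr_ge0; [apply: mulr_ge0; [lra|exact: sqrtr_ge0]|lra].
have sD : Num.sqrt D <= Num.sqrt 2 / (1 - beta2).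
  have i1 : 0 < 1 - beta2 by lra.
  have -> : Num.sqrt 2 / (1 - beta2) = Num.sqrt (2 / (1 - beta2) ^+ 2).
    by rewrite sqrtrM // sqrtrV ?sqr_ge0 // sqrtr_sqr ger0_norm // ltW.
  rewrite ler_sqrt ?divr_ge0 ?sqr_ge0 // /D ler_pM2r ?invr_gt0 ?exprn_gt0 //; nra.
have s22 : Num.sqrt 2 * Num.sqrt 2 = 2 :> R by rewrite -expr2 sqr_sqrtr.
have s20 : 0 <= Num.sqrt 2 :> R by apply: sqrtr_ge0.
set Q := c * Num.sqrt D in hV.
have Q0 : 0 <= Q by rewrite mulr_ge0 ?sqrtr_ge0.
have Q4 : Q <= 4 * X / (1 - beta2).
  apply: (le_trans (ler_wpM2l c0 sD)).
  rewrite cX.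
  have -> : 2 * Num.sqrt 2 * (1 - beta1) * X * (Num.sqrt 2 / (1 - beta2)) =
     (1 - beta1) * (2 * (Num.sqrt 2 * Num.sqrt 2) * X / (1 - beta2)) by ring.
  have e4 : 2 * 2 = 4 :> R by lra.
  rewrite s22 e4.
  apply: ler_piMl; [apply: divr_ge0; lra | lra].
have p1 : 0 < 1 - beta1 ^+ t by rewrite subr_gt0 expr_lt1 //; lra.
have p2 : 0 < 1 - beta2 ^+ t by rewrite subr_gt0 expr_lt1 //; lra.
have p2l : 1 - beta2 ^+ t <= 1 by rewrite lerBlDr lerDl exprn_ge0 //; lra.
have p2b : 1 - beta2 <= 1 - beta2 ^+ t.
  suff : beta2 ^+ t <= beta2 by lra.
  rewrite -(prednK ht) exprS; apply: ler_piMr; first lra.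
  by apply: exprn_ile1; lra.
have hmh : `|mh - g| <= 2 * Num.sqrt 2 * beta1 * X.
  rewrite -cw /mh /mofo_mhat mxE.
  have key : forall M : R, `|M - (1 - beta1 ^+ t) * g| <=
      c * ((1 - beta1 ^+ t) * 0 + (1 - beta1 ^+ t) * (beta1 / (1 - beta1))) ->
      `|(1 - beta1 ^+ t)^-1 * M - g| <= c * (beta1 / (1 - beta1)).
    move=> M hM.
    have -> : (1 - beta1 ^+ t)^-1 * M - g = (1 - beta1 ^+ t)^-1 * (M - (1 - beta1 ^+ t) * g).
      by field; rewrite gt_eqF.
    rewrite normrM ger0_norm ?invr_ge0 ?(ltW p1) // ler_pdivrMl //.
    by move: hM; rewrite mulr0 add0r mulrCA.
  exact: key hP.
have hvl : (1 - beta2) * g ^+ 2 <= vh.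
  have := @v_lb R d B blk f alpha beta1 beta2 etas theta0 hb1 hb2 hq t.-1 i.
  rewrite prednK // -expr2 => hv.
  rewrite /vh /mofo_vhat mxE.
  apply: (le_trans hv).
  have v0 := (@mv_inv R d B blk f alpha beta1 beta2 etas theta0 hb1 hb2 hq t i).1.
  rewrite ler_pdivlMl //; apply: ler_piMl => //.
have vh0 : 0 <= vh.
  apply: le_trans hvl; apply: mulr_ge0; [lra|exact: sqr_ge0].
have hvu : vh * (1 - beta2) <= (`|g| + Q) ^+ 2.
  apply: (le_trans (ler_wpM2l vh0 p2b)).
  have -> : vh * (1 - beta2 ^+ t) = mofo_v blk f alpha beta1 beta2 etas theta0 t ord0 i.
    by rewrite /vh /mofo_vhat mxE mulrC mulrA divff ?mul1r // gt_eqF.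
  exact: hV.
exact: (@final_scalar R g mh vh X Q beta1 beta2 hb1 hb2 X0 hmh hvl hvu Q0 Q4).
Qed.
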